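(* Let $\mathbf{L}=\mathbf{b}+\mathbb{N}(\mathbf{F})\subseteq\mathbb{N}^n$ be a linear set ($\mathbf{F}$ finite) and $\mathbf{X}\subseteq\mathbf{L}$. Then the following are equivalent: (a) for every $\mathbf{x}\in\mathbf{L}$ and every $\mathbf{w}\in\mathbb{N}_{\ge1}(\mathbf{F})$ there is $N\in\mathbb{N}$ with $\mathbf{x}+\mathbb{N}_{\ge N}\mathbf{w}\subseteq\mathbf{X}$; (b) for every $\mathbf{x}\in\mathbf{L}$ and every $\mathbf{w}\in\mathrm{int}(\mathbf{L})-\mathbf{b}=\mathrm{int}(\mathbb{N}(\mathbf{F}))$ there is $N\in\mathbb{N}$ with $\mathbf{x}+\mathbb{N}_{\ge N}\mathbf{w}\subseteq\mathbf{X}$. In particular, whether $\mathbf{X}\trianglelefteq\mathbf{L}$ holds does not depend on the chosen representation of $\mathbf{L}$.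
   Context: $\mathbb{N}_{\ge1}(\mathbf{F})=\{\sum_{\mathbf{f}\in\mathbf{F}}\lambda_{\mathbf{f}}\mathbf{f}\mid\lambda_{\mathbf{f}}\in\mathbb{N},\lambda_{\mathbf{f}}\ge1\}$. For an $\mathbb{N}$-generated set $\mathbf{P}$ (closed under addition, containing $\mathbf{0}$), a vector $\mathbf{v}\in\mathbf{P}$ is interior if for every $\mathbf{x}\in\mathbf{P}$ there is $m\in\mathbb{N}$ with $m\mathbf{v}-\mathbf{x}\in\mathbf{P}$; $\mathrm{int}(\mathbf{P})$ is the set of interior vectors. For a linear set $\mathbf{L}=\mathbf{b}+\mathbb{N}(\mathbf{F})\subseteq\mathbb{N}^n$ ($\mathbf{b}$ is its unique minimal element), $\mathrm{int}(\mathbf{L})=\mathbf{b}+\mathrm{int}(\mathbf{L}-\mathbf{b})$. $\mathbf{X}\trianglelefteq\mathbf{L}$ is defined by condition (a). *)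

(* Defs.v *)
From mathcomp Require Import all_boot.
Set Implicit Arguments. Unset Strict Implicit. Unset Printing Implicit Defensive.

Definition vec (n : nat) := {ffun 'I_n -> nat}.

Definition vadd n (u v : vec n) : vec n := [ffun i => u i + v i].
Definition vscal n (k : nat) (v : vec n) : vec n := [ffun i => k * v i].

Definition Nspan n (F : seq (vec n)) (x : vec n) : Prop :=
  exists lam : vec n -> nat,
    forall i, x i = \sum_(f <- undup F) lam f * f i.

Definition Nspan1 n (F : seq (vec n)) (w : vec n) : Prop :=
  exists lam : vec n -> nat,
    (forall f, f \in F -> 1 <= lam f) /\
    forall i, w i = \sum_(f <- undup F) lam f * f i.

Definition linset n (b : vec n) (F : seq (vec n)) (x : vec n) : Prop :=
  exists y, Nspan F y /\ x = vadd b y.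

Definition interior n (P : vec n -> Prop) (v : vec n) : Prop :=
  P v /\ forall x, P x -> exists m y, P y /\ vscal m v = vadd x y.

Definition eventually_in n (X : vec n -> Prop) (x w : vec n) : Prop :=
  exists N, forall k, N <= k -> X (vadd x (vscal k w)).

Definition cond_a n (b : vec n) (F : seq (vec n)) (X : vec n -> Prop) : Prop :=
  forall x w, linset b F x -> Nspan1 F w -> eventually_in X x w.

(* condition (b): directions in int(L) - b = int(N(F)) *)
Definition cond_b n (b : vec n) (F : seq (vec n)) (X : vec n -> Prop) : Prop :=
  forall x w, linset b F x -> interior (Nspan F) w -> eventually_in X x w.

(* Main.v *)
Require Import Defs.
From mathcomp Require Import all_boot.
From mathcomp Require Import zify.

Lemma Nspan_add n (F : seq (vec n)) u v : Nspan F u -> Nspan F v -> Nspan F (vadd u v).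
Proof.
move=> [l Hl] [m Hm]; exists (fun f => l f + m f) => i.
rewrite ffunE Hl Hm -big_split /=; apply: eq_bigr => f _; by rewrite mulnDl.
Qed.

Lemma Nspan_scal n (F : seq (vec n)) k v : Nspan F v -> Nspan F (vscal k v).
Proof.
move=> [l Hl]; exists (fun f => k * l f) => i.
rewrite ffunE Hl big_distrr /=; apply: eq_bigr => f _; by rewrite mulnA.
Qed.

Lemma Nspan0 n (F : seq (vec n)) : Nspan F [ffun _ => 0].
Proof. exists (fun _ => 0) => i; rewrite ffunE big1 //. Qed.

Lemma Nspan1_int n (F : seq (vec n)) w : Nspan1 F w -> interior (Nspan F) w.
Proof.
move=> [lam [Hl Hw]]; split; first by exists lam.
move=> x [mu Hmu].
set M := \sum_(f <- undup F) mu f.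
exists M, [ffun i => \sum_(f <- undup F) (M * lam f - mu f) * f i]; split.
  by exists (fun f => M * lam f - mu f) => i; rewrite ffunE.
apply/ffunP => i; rewrite !ffunE Hw Hmu big_distrr -big_split /=.
rewrite big_seq_cond [RHS]big_seq_cond; apply: eq_bigr => f /andP[Hf _].
have h1 : 1 <= lam f by apply: Hl; rewrite -mem_undup.
have h2 : mu f <= M by rewrite /M (bigD1_seq f) ?undup_uniq //= leq_addr.
have h3 : mu f <= M * lam f by apply: (leq_trans h2); rewrite leq_pmulr.
by rewrite mulnA -mulnDl subnKC.
Qed.

Lemma linset_add n (b : vec n) F x w : linset b F x -> Nspan F w -> linset b F (vadd x w).
Proof.
move=> [y [Hy ->]] Hw; exists (vadd y w); split; first exact: Nspan_add.
by apply/ffunP => i; rewrite !ffunE addnA.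
Qed.

Lemma part1 n (b : vec n) F (X : vec n -> Prop) : cond_a b F X <-> cond_b b F X.
Proof.
split => H x w Hx Hw.
- have [Hw0 Hint] := Hw.
  set s : vec n := [ffun i => \sum_(f <- undup F) f i].
  have Hs : Nspan F s by exists (fun _ => 1) => i; rewrite ffunE; apply: eq_bigr => f _; rewrite mul1n.
  have [m [y [Hy Hmy]]] := Hint s Hs.
  set u := vscal m.+1 w.
  have Hu : Nspan1 F u.
    have [mu Hmu] := @Nspan_add _ F _ _ Hy Hw0.
    exists (fun f => 1 + mu f); split => // i.
    have -> : u i = s i + vadd y w i.
      by move/ffunP: Hmy => /(_ i); rewrite /u !ffunE; lia.
    rewrite Hmu ffunE -big_split /=; apply: eq_bigr => f _; by rewrite mulnDl mul1n.
  have unif : forall R, exists N, forall r, r < R -> forall q, N <= q ->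
      X (vadd (vadd x (vscal r w)) (vscal q u)).
    elim=> [|R [N IH]]; first by exists 0.
    have [N' HN'] := H _ _ (@linset_add _ b F _ _ Hx (@Nspan_scal _ F R _ Hw0)) Hu.
    exists (maxn N N') => r; rewrite ltnS leq_eqVlt => /orP[/eqP ->|Hr] q Hq.
      by apply: HN'; apply: leq_trans Hq; rewrite leq_maxr.
    by apply: IH => //; apply: leq_trans Hq; rewrite leq_maxl.
  have [N HN] := unif m.+1.
  exists (N * m.+1) => k Hk.
  have -> : vadd x (vscal k w) = vadd (vadd x (vscal (k %% m.+1) w)) (vscal (k %/ m.+1) u).
    apply/ffunP => i; rewrite !ffunE {1}(divn_eq k m.+1).
    rewrite -addnA; congr (_ + _); rewrite mulnDl addnC mulnA //.
  apply: HN; first by rewrite ltn_mod.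
  by rewrite leq_divRL.
- by apply: H => //; apply: Nspan1_int.
Qed.

Lemma interior_ext n (P Q : vec n -> Prop) v :
  (forall x, P x <-> Q x) -> interior P v -> interior Q v.
Proof.
move=> E [Pv H]; split; first by apply/E.
move=> x /E /H [m [y [Py Hy]]]; exists m, y; split => //; exact/E.
Qed.

Lemma part2 n (b b' : vec n) F F' :
  (forall x, linset b F x <-> linset b' F' x) -> b = b' /\ (forall z, Nspan F z <-> Nspan F' z).
Proof.
move=> E.
have Hb : linset b F b by exists [ffun _ => 0]; split; [apply: Nspan0| apply/ffunP => i; rewrite !ffunE addn0].
have Hb' : linset b' F' b' by exists [ffun _ => 0]; split; [apply: Nspan0| apply/ffunP => i; rewrite !ffunE addn0].
have [y [_ Ey]] := proj1 (E b) Hb.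
have [y' [_ Ey']] := proj2 (E b') Hb'.
have bb : b = b'.
  apply/ffunP => i.
  have h1 : b i = b' i + y i by rewrite {1}Ey ffunE.
  have h2 : b' i = b i + y' i by rewrite {1}Ey' ffunE.
  have h3 : b i = b' i by lia.
  exact: h3.
rewrite -bb in E *; split => // z; split => Hz.
- have [z' [Hz' Ez]] := proj1 (E (vadd b z)) (ex_intro _ z (conj Hz erefl)).
  have -> : z = z'.
    apply/ffunP => i; have h : b i + z i = b i + z' i.
      by move/ffunP: Ez => /(_ i); rewrite !ffunE => e; exact: e.
    have h3 : z i = z' i by lia.
    exact: h3.
  done.
- have [z' [Hz' Ez]] := proj2 (E (vadd b z)) (ex_intro _ z (conj Hz erefl)).
  have -> : z = z'.
    apply/ffunP => i; have h : b i + z i = b i + z' i.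
      by move/ffunP: Ez => /(_ i); rewrite !ffunE => e; exact: e.
    have h3 : z i = z' i by lia.
    exact: h3.
  done.
Qed.

Theorem mainTheorem11 :
  (forall (n : nat) (b : vec n) (F : seq (vec n)) (X : vec n -> Prop),
     (forall x, X x -> linset b F x) ->
     (cond_a b F X <-> cond_b b F X)) /\
  (forall (n : nat) (b b' : vec n) (F F' : seq (vec n)) (X : vec n -> Prop),
     (forall x, linset b F x <-> linset b' F' x) ->
     (forall x, X x -> linset b F x) ->
     (cond_a b F X <-> cond_a b' F' X)).
Proof.
split; first by move=> *; apply: part1.
move=> n b b' F F' X E _.
rewrite part1 part1.
have [bb EN] := @part2 _ b b' F F' E; subst b'.
split => H x w Hx Hw.
- apply: H; first by apply/E.
  by apply: (@interior_ext _ (Nspan F') (Nspan F) w _ Hw) => z; split => /EN.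
- apply: H; first by apply/E.
  by apply: (@interior_ext _ (Nspan F) (Nspan F') w _ Hw) => z; split => /EN.
Qed.
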